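(* For an entire function $G$, the condition $\limsup_{|z|\to\infty}\operatorname{Re}(\overline{z}G(z))\le 0$ holds if and only if $G(z)=az+b$ with either (i) $a\in\mathbb{C}_-$ and $b\in\mathbb{C}$, or (ii) $a\in i\mathbb{R}$ and $b=0$.
   Context: $\mathbb{C}_-:=\{z\in\mathbb{C}:\operatorname{Re}z<0\}$. *)

(* Defs.v *)
From Stdlib Require Import Reals.
From Coquelicot Require Import Coquelicot.
Open Scope R_scope.

Definition entire (G : C -> C) : Prop :=
  forall z : C, ex_derive (K := C_AbsRing) (V := C_NormedModule) G z.

Definition limsup_at_infty_le0 (f : C -> R) : Prop :=
  forall eps : R, 0 < eps ->
    exists M : R, forall z : C, M < Cmod z -> f z <= eps.

Definition in_Cminus (a : C) : Prop := Re a < 0.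
Definition in_iR (a : C) : Prop := Re a = 0.

(* Main.v *)
Require Import Defs.
From Stdlib Require Import Reals Lra Psatz ZArith Lia.
From Coquelicot Require Import Coquelicot.
Open Scope R_scope.

Definition eith (t : R) : C := (cos t, sin t).

Lemma Cmod_eith t : Cmod (eith t) = 1.
Proof.
  unfold Cmod, eith; simpl. 
  replace (cos t * (cos t * 1) + sin t * (sin t * 1)) with 1. apply sqrt_1.
  pose proof (sin2_cos2 t) as H; unfold Rsqr in H. nra.
Qed.

Lemma Cmod_le_abs (a b : R) : Cmod (a, b) <= Rabs a + Rabs b.
Proof.
  unfold Cmod; cbn [fst snd].
  apply Rle_trans with (sqrt ((Rabs a + Rabs b)^2)).
  - apply sqrt_le_1_alt. rewrite <- (pow2_abs a), <- (pow2_abs b).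
    pose proof (Rabs_pos a); pose proof (Rabs_pos b). nra.
  - rewrite sqrt_pow2. lra. pose proof (Rabs_pos a); pose proof (Rabs_pos b). lra.
Qed.

Lemma sin_lip u t : Rabs (sin u - sin t) <= Rabs (u - t).
Proof.
  destruct (MVT_abs sin cos t u) as [c [Hc _]].
  { intros; apply derivable_pt_lim_sin. }
  rewrite Hc. pose proof (COS_bound c).
  rewrite <- (Rmult_1_l (Rabs (u - t))) at 2.
  apply Rmult_le_compat_r. apply Rabs_pos. apply Rabs_le. lra.
Qed.

Lemma cos_lip u t : Rabs (cos u - cos t) <= Rabs (u - t).
Proof.
  destruct (MVT_abs cos (fun x => - sin x) t u) as [c [Hc _]].
  { intros; apply derivable_pt_lim_cos. }
  rewrite Hc. pose proof (SIN_bound c).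
  rewrite <- (Rmult_1_l (Rabs (u - t))) at 2.
  apply Rmult_le_compat_r. apply Rabs_pos. apply Rabs_le. lra.
Qed.

Lemma eith_lip u t : Cmod (eith u - eith t) <= 2 * Rabs (u - t).
Proof.
  unfold eith. unfold Cminus, Cplus, Copp; simpl.
  eapply Rle_trans. apply Cmod_le_abs.
  pose proof (sin_lip u t); pose proof (cos_lip u t). 
  replace (cos u + - cos t) with (cos u - cos t) by ring.
  replace (sin u + - sin t) with (sin u - sin t) by ring. lra.
Qed.

Lemma Cmod_RtoC_mult (r : R) (z : C) : Cmod (RtoC r * z) = Rabs r * Cmod z.
Proof. rewrite Cmod_mult. rewrite Cmod_R. reflexivity. Qed.

Lemma C_ext (a b : C) : Re a = Re b -> Im a = Im b -> a = b.
Proof. destruct a, b; simpl; intros; subst; reflexivity. Qed.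

Lemma im_le_Cmod (c : C) : Rabs (Im c) <= Cmod c.
Proof.
  destruct c as [x y]. unfold Cmod, Im; cbn [fst snd].
  rewrite <- sqrt_Rsqr_abs. apply sqrt_le_1_alt. unfold Rsqr. nra.
Qed.

Definition cdiff (f : C -> C) (w : C) (l : C) := forall eps, 0 < eps -> exists d, 0 < d /\
  forall u, Cmod (u - w) < d -> Cmod (f u - f w - l * (u - w)) <= eps * Cmod (u - w).

Lemma is_derive_cdiff f w l : is_derive (K:=C_AbsRing) (V:=C_NormedModule) f w l -> cdiff f w l.
Proof.
  intros [_ H] eps Heps.
  specialize (H w (fun P HP => HP) (mkposreal eps Heps)).
  destruct H as [d Hd]. exists d. split. apply cond_pos. intros u Hu.
  specialize (Hd u Hu). rewrite (Cmult_comm l). exact Hd.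
Qed.

Lemma cdiff_is_derive' f w l : cdiff f w l -> is_derive (K:=C_AbsRing) (V:=AbsRing_NormedModule C_AbsRing) f w l.
Proof.
  intros H. split. apply is_linear_scal_l.
  intros x Hx. apply (@is_filter_lim_locally_unique C_AbsRing (AbsRing_NormedModule C_AbsRing)) in Hx. subst x.
  intros [eps Heps]. destruct (H eps Heps) as [d [Hd Hd2]].
  exists (mkposreal d Hd). intros u Hu. simpl. 
  specialize (Hd2 u Hu). rewrite (Cmult_comm l) in Hd2. exact Hd2.
Qed.

Lemma is_derive_cdiff' f w l : is_derive (K:=C_AbsRing) (V:=AbsRing_NormedModule C_AbsRing) f w l -> cdiff f w l.
Proof.
  intros [_ H] eps Heps.
  specialize (H w (fun P HP => HP) (mkposreal eps Heps)).
  destruct H as [d Hd]. exists d. split. apply cond_pos. intros u Hu.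
  specialize (Hd u Hu). rewrite (Cmult_comm l). exact Hd.
Qed.

Lemma cdiff_mult f g w lf lg : cdiff f w lf -> cdiff g w lg -> cdiff (fun u => f u * g u)%C w (lf * g w + f w * lg)%C.
Proof.
  intros Hf Hg. apply is_derive_cdiff'.
  apply (is_derive_mult (K:=C_AbsRing)). apply cdiff_is_derive'; auto. apply cdiff_is_derive'; auto.
  intros; apply Cmult_comm.
Qed.

Lemma cdiff_ext f g w l : (forall u, f u = g u) -> cdiff f w l -> cdiff g w l.
Proof.
  intros E H eps He. destruct (H eps He) as [d [Hd H2]]. exists d; split; auto.
  intros u Hu. rewrite <- !E. auto.
Qed.

Lemma cdiff_const (c w : C) : cdiff (fun _ => c) w 0%C.
Proof.
  intros eps He. exists 1; split; [lra|]. intros u _.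
  replace (c - c - 0 * (u - w))%C with (RtoC 0) by ring. rewrite Cmod_0.
  pose proof (Cmod_ge_0 (u - w)). nra.
Qed.

Lemma cdiff_id (w : C) : cdiff (fun u => u) w 1%C.
Proof.
  intros eps He. exists 1; split; [lra|]. intros u _.
  replace (u - w - 1 * (u - w))%C with (RtoC 0) by ring. rewrite Cmod_0.
  pose proof (Cmod_ge_0 (u - w)). nra.
Qed.

Lemma cdiff_inv_aff (a b w : C) : (a * w + b <> 0)%C ->
  cdiff (fun u => / (a * u + b))%C w (- a / ((a * w + b) * (a * w + b)))%C.
Proof.
  intros HD eps He. set (D := (a * w + b)%C) in *.
  assert (HmD : 0 < Cmod D) by (apply Cmod_gt_0; auto).
  pose proof (Cmod_ge_0 a) as Ha.
  set (d := Rmin (Cmod D / (2 * Cmod a + 1)) (eps * (Cmod D * Cmod D * Cmod D) / (2 * (Cmod a * Cmod a) + 1))).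
  assert (Hd1 : d <= Cmod D / (2 * Cmod a + 1)) by apply Rmin_l.
  assert (Hd2 : d <= eps * (Cmod D * Cmod D * Cmod D) / (2 * (Cmod a * Cmod a) + 1)) by apply Rmin_r.
  exists d. split.
  { apply Rmin_pos; apply Rdiv_lt_0_compat; try nra.
    apply Rmult_lt_0_compat; auto. apply Rmult_lt_0_compat; nra. }
  intros u Hu. set (h := (u - w)%C) in *.
  assert (Hah : Cmod (a * h) <= Cmod D / 2).
  { rewrite Cmod_mult. pose proof (Cmod_ge_0 h).
    apply Rle_trans with (Cmod a * (Cmod D / (2 * Cmod a + 1))).
    apply Rmult_le_compat_l; lra.
    apply Rmult_le_reg_r with (2 * Cmod a + 1). lra.
    field_simplify; try lra; try nra. }
  assert (Heq : (a * u + b = D + a * h)%C) by (unfold D, h; ring).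
  assert (HDah : Cmod D / 2 <= Cmod (D + a * h)).
  { pose proof (Cmod_triangle (D + a * h) (- (a * h))).
    rewrite Cmod_opp in H. replace (D + a * h + - (a * h))%C with D in H by ring. lra. }
  assert (HDah0 : (D + a * h <> 0)%C).
  { intro E. rewrite E, Cmod_0 in HDah. lra. }
  replace (/ (a * u + b) - / D - - a / (D * D) * h)%C with (a * a * h * h / (D * D * (D + a * h)))%C.
  2: { rewrite Heq. field. split; auto. }
  rewrite Cmod_div. 2: { apply Cmult_neq_0; auto. apply Cmult_neq_0; auto. }
  rewrite !Cmod_mult.
  pose proof (Cmod_ge_0 h) as Hh.
  assert (Hpos : 0 < Cmod D * Cmod D * Cmod (D + a * h)).
  { apply Rmult_lt_0_compat. nra. lra. }
  apply Rle_trans with (Cmod a * Cmod a * Cmod h * Cmod h / (Cmod D * Cmod D * (Cmod D / 2))).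
  { unfold Rdiv. apply Rmult_le_compat_l. nra.
    apply Rinv_le_contravar. nra. apply Rmult_le_compat_l; nra. }
  assert (Hh2 : Cmod h * (2 * (Cmod a * Cmod a) + 1) <= eps * (Cmod D * Cmod D * Cmod D)).
  { apply Rle_trans with (d * (2 * (Cmod a * Cmod a) + 1)). apply Rmult_le_compat_r; nra.
    apply Rmult_le_reg_r with (/ (2 * (Cmod a * Cmod a) + 1)). apply Rinv_0_lt_compat; nra.
    rewrite Rmult_assoc, Rinv_r by nra. rewrite Rmult_1_r. exact Hd2. }
  apply Rmult_le_reg_r with (Cmod D * Cmod D * Cmod D). nra.
  field_simplify; try lra. 
  assert (Cmod a * Cmod a * Cmod h * 2 <= eps * (Cmod D * Cmod D * Cmod D)) by nra.
  nra.
Qed.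

Lemma cdiff_cont f w l : cdiff f w l -> forall eps, 0 < eps -> exists d, 0 < d /\
  forall u, Cmod (u - w) < d -> Cmod (f u - f w) < eps.
Proof.
  intros H eps He. destruct (H 1 Rlt_0_1) as [d [Hd H1]].
  pose proof (Cmod_ge_0 l).
  exists (Rmin d (eps / (Cmod l + 2))). split.
  { apply Rmin_pos; auto. apply Rdiv_lt_0_compat; lra. }
  intros u Hu. 
  assert (Hu1 : Cmod (u - w) < d) by (eapply Rlt_le_trans; [apply Hu| apply Rmin_l]).
  assert (Hu2 : Cmod (u - w) < eps / (Cmod l + 2)) by (eapply Rlt_le_trans; [apply Hu| apply Rmin_r]).
  specialize (H1 u Hu1).
  replace (f u - f w)%C with ((f u - f w - l * (u - w)) + l * (u - w))%C by ring.
  eapply Rle_lt_trans. apply Cmod_triangle. rewrite Cmod_mult.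
  pose proof (Cmod_ge_0 (u - w)).
  apply Rle_lt_trans with ((Cmod l + 1) * Cmod (u - w)). nra.
  apply Rle_lt_trans with ((Cmod l + 1) * (eps / (Cmod l + 2))).
  apply Rmult_le_compat_l; lra.
  apply Rmult_lt_reg_r with (Cmod l + 2). lra. field_simplify; nra.
Qed.

Definition ccont (h : R -> C) (t : R) := forall eps, 0 < eps -> exists d, 0 < d /\
  forall u, Rabs (u - t) < d -> Cmod (h u - h t) < eps.

Lemma ccont_continuous h t : ccont h t -> @continuous R_UniformSpace C_R_CompleteNormedModule h t.
Proof.
  intros H. apply filterlim_locally. intros [eps He].
  destruct (H eps He) as [d [Hd H2]]. exists (mkposreal d Hd). intros u Hu.
  specialize (H2 u Hu). simpl.
  pose proof (re_le_Cmod (h u - h t)%C). pose proof (im_le_Cmod (h u - h t)%C).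
  destruct (h u) as [a1 a2], (h t) as [b1 b2]. 
  unfold Re, Im, Cminus, Cplus, Copp in *; simpl in *.
  split; [change (Rabs (a1 - b1) < eps) | change (Rabs (a2 - b2) < eps)]; unfold Rminus; lra.
Qed.

Lemma ex_RInt_ccont h a b : (forall t, Rmin a b <= t <= Rmax a b -> ccont h t) ->
  @ex_RInt C_R_CompleteNormedModule h a b.
Proof.
  intros H. apply ex_RInt_continuous. intros z Hz. apply ccont_continuous. auto.
Qed.

Lemma norm_C_R (z : C) : @norm R_AbsRing C_R_NormedModule z = Cmod z.
Proof.
  unfold norm; simpl. unfold prod_norm, Cmod.
  change (sqrt (Rabs (fst z) ^ 2 + Rabs (snd z) ^ 2) = sqrt (fst z ^ 2 + snd z ^ 2)).
  rewrite !pow2_abs. reflexivity.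
Qed.

Lemma is_RInt_Cmult (f : R -> C) a b l (c : C) :
  @is_RInt C_R_NormedModule f a b l -> @is_RInt C_R_NormedModule (fun t => c * f t)%C a b (c * l)%C.
Proof.
  intros H.
  pose proof (is_RInt_fct_extend_fst _ _ _ _ H) as H1.
  pose proof (is_RInt_fct_extend_snd _ _ _ _ H) as H2.
  destruct c as [c1 c2].
  apply (is_RInt_fct_extend_pair (U:=R_NormedModule) (V:=R_NormedModule)).
  - eapply is_RInt_ext. 2: apply (is_RInt_minus _ _ _ _ _ _ (is_RInt_scal _ _ _ c1 _ H1) (is_RInt_scal _ _ _ c2 _ H2)).
    intros; simpl. unfold minus, plus, opp, scal; simpl. unfold mult; simpl. ring.
  - eapply is_RInt_ext. 2: apply (is_RInt_plus _ _ _ _ _ _ (is_RInt_scal _ _ _ c1 _ H2) (is_RInt_scal _ _ _ c2 _ H1)).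
    intros; simpl. unfold minus, plus, opp, scal; simpl. unfold mult; simpl. ring.
Qed.

Lemma is_RInt_conj (f : R -> C) a b l :
  @is_RInt C_R_NormedModule f a b l -> @is_RInt C_R_NormedModule (fun t => Cconj (f t)) a b (Cconj l).
Proof.
  intros H.
  pose proof (is_RInt_fct_extend_fst _ _ _ _ H) as H1.
  pose proof (is_RInt_fct_extend_snd _ _ _ _ H) as H2.
  apply (is_RInt_fct_extend_pair (U:=R_NormedModule) (V:=R_NormedModule)).
  - exact H1.
  - eapply is_RInt_ext. 2: apply (is_RInt_opp _ _ _ _ H2).
    intros; simpl. reflexivity.
Qed.

Lemma is_RInt_Re (f : R -> C) a b l :
  @is_RInt C_R_NormedModule f a b l -> is_RInt (fun t => Re (f t)) a b (Re l).
Proof. intros H. exact (is_RInt_fct_extend_fst _ _ _ _ H). Qed.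

Lemma is_RInt_C_const (c : C) a b : @is_RInt C_R_NormedModule (fun _ => c) a b (RtoC (b - a) * c)%C.
Proof.
  eapply is_RInt_ext. 2: { evar_last. apply is_RInt_const. rewrite scal_R_Cmult. reflexivity. }
  intros; reflexivity.
Qed.

Lemma Cint_norm_le (f : R -> C) (g : R -> R) a b lf lg : a <= b ->
  (forall t, a <= t <= b -> Cmod (f t) <= g t) ->
  @is_RInt C_R_NormedModule f a b lf -> is_RInt g a b lg -> Cmod lf <= lg.
Proof.
  intros Hab Hfg Hf Hg. rewrite <- norm_C_R. eapply norm_RInt_le; eauto.
  intros; rewrite norm_C_R; auto.
Qed.

Definition ccontC (f : C -> C) (w : C) := forall eps, 0 < eps -> exists d, 0 < d /\
  forall u, Cmod (u - w) < d -> Cmod (f u - f w) < eps.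

Lemma cdiff_ccontC f w l : cdiff f w l -> ccontC f w.
Proof. intros H; exact (cdiff_cont f w l H). Qed.

Lemma ccont_const (c : C) t : ccont (fun _ => c) t.
Proof.
  intros eps He. exists 1; split; [lra|]. intros u _.
  replace (c - c)%C with (RtoC 0) by ring. rewrite Cmod_0; lra.
Qed.

Lemma ccont_plus h k t : ccont h t -> ccont k t -> ccont (fun u => h u + k u)%C t.
Proof.
  intros Hh Hk eps He.
  destruct (Hh (eps/2)) as [d1 [Hd1 H1]]; [lra|].
  destruct (Hk (eps/2)) as [d2 [Hd2 H2]]; [lra|].
  exists (Rmin d1 d2); split; [apply Rmin_pos; auto|]. intros u Hu.
  assert (Rabs (u - t) < d1) by (eapply Rlt_le_trans; [apply Hu|apply Rmin_l]).
  assert (Rabs (u - t) < d2) by (eapply Rlt_le_trans; [apply Hu|apply Rmin_r]).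
  replace (h u + k u - (h t + k t))%C with ((h u - h t) + (k u - k t))%C by ring.
  eapply Rle_lt_trans. apply Cmod_triangle. specialize (H1 u H). specialize (H2 u H0). lra.
Qed.

Lemma ccont_mult h k t : ccont h t -> ccont k t -> ccont (fun u => h u * k u)%C t.
Proof.
  intros Hh Hk eps He.
  set (A := Cmod (h t)). set (B := Cmod (k t)).
  assert (HA : 0 <= A) by apply Cmod_ge_0. assert (HB : 0 <= B) by apply Cmod_ge_0.
  set (e1 := Rmin 1 (eps / (3 * (B + 1)))). set (e2 := Rmin 1 (eps / (3 * (A + 1)))).
  assert (He1 : 0 < e1) by (apply Rmin_pos; [lra| apply Rdiv_lt_0_compat; lra]).
  assert (He2 : 0 < e2) by (apply Rmin_pos; [lra| apply Rdiv_lt_0_compat; lra]).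
  destruct (Hh e1 He1) as [d1 [Hd1 H1]].
  destruct (Hk e2 He2) as [d2 [Hd2 H2]].
  exists (Rmin d1 d2); split; [apply Rmin_pos; auto|]. intros u Hu.
  assert (Rabs (u - t) < d1) by (eapply Rlt_le_trans; [apply Hu|apply Rmin_l]).
  assert (Rabs (u - t) < d2) by (eapply Rlt_le_trans; [apply Hu|apply Rmin_r]).
  specialize (H1 u H). specialize (H2 u H0).
  replace (h u * k u - h t * k t)%C with ((h u - h t) * (k u - k t) + (h u - h t) * k t + h t * (k u - k t))%C by ring.
  eapply Rle_lt_trans. apply Cmod_triangle. 
  eapply Rle_lt_trans. apply Rplus_le_compat_r. apply Cmod_triangle. 
  rewrite !Cmod_mult. fold A B.
  set (x := Cmod (h u - h t)) in *. set (y := Cmod (k u - k t)) in *.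
  assert (0 <= x) by apply Cmod_ge_0. assert (0 <= y) by apply Cmod_ge_0.
  assert (e1 <= 1) by apply Rmin_l. assert (e2 <= 1) by apply Rmin_l.
  assert (Hx : x * (B + 1) <= eps / 3).
  { apply Rle_trans with (e1 * (B + 1)). nra.
    apply Rle_trans with (eps / (3 * (B + 1)) * (B + 1)). apply Rmult_le_compat_r. lra. apply Rmin_r.
    right; field; lra. }
  assert (Hy : y * (A + 1) <= eps / 3).
  { apply Rle_trans with (e2 * (A + 1)). nra.
    apply Rle_trans with (eps / (3 * (A + 1)) * (A + 1)). apply Rmult_le_compat_r. lra. apply Rmin_r.
    right; field; lra. }
  nra.
Qed.

Lemma ccont_comp f h t : ccontC f (h t) -> ccont h t -> ccont (fun u => f (h u)) t.
Proof.
  intros Hf Hh eps He. destruct (Hf eps He) as [d1 [Hd1 H1]].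
  destruct (Hh d1 Hd1) as [d2 [Hd2 H2]]. exists d2; split; auto.
Qed.

Lemma ccont_lip h t L : (forall u, Cmod (h u - h t) <= L * Rabs (u - t)) -> ccont h t.
Proof.
  intros H eps He. exists (eps / (Rabs L + 1)). split. apply Rdiv_lt_0_compat; [lra|].
  pose proof (Rabs_pos L); lra.
  intros u Hu. eapply Rle_lt_trans. apply H.
  pose proof (Rabs_pos L). pose proof (Rabs_pos (u - t)). pose proof (Rle_abs L).
  apply Rle_lt_trans with ((Rabs L + 1) * Rabs (u - t)). nra.
  apply Rlt_le_trans with ((Rabs L + 1) * (eps / (Rabs L + 1))).
  apply Rmult_lt_compat_l; lra. right; field; lra.
Qed.

Lemma ccont_eith t : ccont eith t.
Proof. apply (ccont_lip _ _ 2). intros; apply eith_lip. Qed.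

Lemma ccontC_conj w : ccontC Cconj w.
Proof.
  intros eps He. exists eps; split; auto. intros u Hu.
  rewrite <- Cminus_conj, Cmod_conj. auto.
Qed.

Record rect := mkR { rs1 : R; rs2 : R; rt1 : R; rt2 : R }.

Section Goursat.
Variable J : R -> R -> R -> R -> C.
Variables a b c d : R.
Hypothesis Hab : a <= b.
Hypothesis Hcd : c <= d.
Hypothesis HS : forall s1 s2 t1 t2, a <= s1 -> s1 <= s2 -> s2 <= b -> c <= t1 -> t1 <= t2 -> t2 <= d ->
  J s1 s2 t1 t2 = (J s1 ((s1+s2)/2) t1 t2 + J ((s1+s2)/2) s2 t1 t2)%C.
Hypothesis HT : forall s1 s2 t1 t2, a <= s1 -> s1 <= s2 -> s2 <= b -> c <= t1 -> t1 <= t2 -> t2 <= d ->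
  J s1 s2 t1 t2 = (J s1 s2 t1 ((t1+t2)/2) + J s1 s2 ((t1+t2)/2) t2)%C.
Hypothesis Hloc : forall s t, a <= s <= b -> c <= t <= d -> forall eps, 0 < eps -> exists del, 0 < del /\
  forall s1 s2 t1 t2, a <= s1 -> s1 <= s -> s <= s2 -> s2 <= b -> c <= t1 -> t1 <= t -> t <= t2 -> t2 <= d ->
  s2 - s1 < del -> t2 - t1 < del -> Cmod (J s1 s2 t1 t2) <= eps * (s2 - s1 + (t2 - t1))^2.

Definition JR (r : rect) := J (rs1 r) (rs2 r) (rt1 r) (rt2 r).

Definition q1 r := mkR (rs1 r) ((rs1 r + rs2 r)/2) (rt1 r) ((rt1 r + rt2 r)/2).
Definition q2 r := mkR ((rs1 r + rs2 r)/2) (rs2 r) (rt1 r) ((rt1 r + rt2 r)/2).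
Definition q3 r := mkR (rs1 r) ((rs1 r + rs2 r)/2) ((rt1 r + rt2 r)/2) (rt2 r).
Definition q4 r := mkR ((rs1 r + rs2 r)/2) (rs2 r) ((rt1 r + rt2 r)/2) (rt2 r).

Definition step (r : rect) : rect :=
  if Rle_dec (Cmod (JR r) / 4) (Cmod (JR (q1 r))) then q1 r else
  if Rle_dec (Cmod (JR r) / 4) (Cmod (JR (q2 r))) then q2 r else
  if Rle_dec (Cmod (JR r) / 4) (Cmod (JR (q3 r))) then q3 r else q4 r.

Definition inbase (r : rect) := a <= rs1 r /\ rs1 r <= rs2 r /\ rs2 r <= b /\ c <= rt1 r /\ rt1 r <= rt2 r /\ rt2 r <= d.

Lemma JR_split r : inbase r -> JR r = (JR (q1 r) + JR (q2 r) + JR (q3 r) + JR (q4 r))%C.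
Proof.
  intros [H1 [H2 [H3 [H4 [H5 H6]]]]]. unfold JR, q1, q2, q3, q4; simpl.
  rewrite HS by lra. rewrite (HT (rs1 r)) by lra. rewrite (HT ((rs1 r + rs2 r)/2)) by lra. ring.
Qed.

Lemma step_prop r : inbase r ->
  Cmod (JR r) / 4 <= Cmod (JR (step r)) /\
  rs1 r <= rs1 (step r) /\ rs2 (step r) <= rs2 r /\ rt1 r <= rt1 (step r) /\ rt2 (step r) <= rt2 r /\
  rs2 (step r) - rs1 (step r) = (rs2 r - rs1 r) / 2 /\ rt2 (step r) - rt1 (step r) = (rt2 r - rt1 r) / 2.
Proof.
  intros Hin. pose proof Hin as [H1 [H2 [H3 [H4 [H5 H6]]]]].
  unfold step.
  destruct (Rle_dec _ _). { split; [assumption|]. unfold q1; simpl. repeat split; lra. }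
  destruct (Rle_dec _ _). { split; [assumption|]. unfold q2; simpl. repeat split; lra. }
  destruct (Rle_dec _ _). { split; [assumption|]. unfold q3; simpl. repeat split; lra. }
  split. 2: { unfold q4; simpl. repeat split; lra. }
  pose proof (JR_split r Hin) as E.
  pose proof (Cmod_triangle (JR (q1 r) + JR (q2 r) + JR (q3 r)) (JR (q4 r))).
  pose proof (Cmod_triangle (JR (q1 r) + JR (q2 r)) (JR (q3 r))).
  pose proof (Cmod_triangle (JR (q1 r)) (JR (q2 r))).
  rewrite <- E in H. lra.
Qed.

Lemma step_inbase r : inbase r -> inbase (step r).
Proof.
  intros Hin. pose proof (step_prop r Hin) as [_ [A1 [A2 [A3 [A4 [A5 A6]]]]]].
  destruct Hin as [H1 [H2 [H3 [H4 [H5 H6]]]]].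
  unfold inbase. repeat split; lra.
Qed.

Definition base := mkR a b c d.
Definition sq (n : nat) : rect := Nat.iter n step base.

Lemma sq_S n : sq (S n) = step (sq n).
Proof. reflexivity. Qed.

Lemma sq_inbase n : inbase (sq n).
Proof.
  induction n. unfold sq, base, inbase; simpl; lra.
  rewrite sq_S. apply step_inbase; auto.
Qed.

Lemma sq_props n :
  Cmod (JR base) / 4 ^ n <= Cmod (JR (sq n)) /\
  rs2 (sq n) - rs1 (sq n) = (b - a) / 2 ^ n /\ rt2 (sq n) - rt1 (sq n) = (d - c) / 2 ^ n.
Proof.
  induction n.
  - simpl. unfold sq, base; simpl. repeat split; lra.
  - rewrite sq_S. destruct IHn as [I1 [I2 I3]].
    pose proof (step_prop _ (sq_inbase n)) as [A0 [A1 [A2 [A3 [A4 [A5 A6]]]]]].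
    assert (P : 0 < 2 ^ n) by (apply pow_lt; lra).
    assert (P4 : 0 < 4 ^ n) by (apply pow_lt; lra).
    simpl pow. repeat split.
    + apply Rle_trans with (Cmod (JR (sq n)) / 4); [|exact A0].
      replace (Cmod (JR base) / (4 * 4 ^ n)) with ((Cmod (JR base) / 4 ^ n) / 4) by (field; lra). lra.
    + rewrite A5, I2. field. lra.
    + rewrite A6, I3. field. lra.
Qed.

Lemma sq_mono n m : (n <= m)%nat ->
  rs1 (sq n) <= rs1 (sq m) /\ rs2 (sq m) <= rs2 (sq n) /\ rt1 (sq n) <= rt1 (sq m) /\ rt2 (sq m) <= rt2 (sq n).
Proof.
  induction 1. lra.
  rewrite sq_S. pose proof (step_prop _ (sq_inbase m)) as [_ [A1 [A2 [A3 [A4 _]]]]]. lra.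
Qed.

Lemma sq_nest n m : rs1 (sq n) <= rs2 (sq m) /\ rt1 (sq n) <= rt2 (sq m).
Proof.
  destruct (Nat.le_ge_cases n m) as [H|H].
  - pose proof (sq_mono n m H). pose proof (sq_inbase m) as [_ [X [_ [_ [Y _]]]]]. lra.
  - pose proof (sq_mono m n H). pose proof (sq_inbase n) as [_ [X [_ [_ [Y _]]]]]. lra.
Qed.

Lemma pow2_large x : exists n, x < 2 ^ n.
Proof.
  destruct (archimed x) as [H _].
  assert (E : forall n, INR n < 2 ^ n).
  { induction n. simpl; lra. rewrite S_INR. simpl. assert (1 <= 2 ^ n) by (apply pow_R1_Rle; lra). lra. }
  destruct (Z_lt_le_dec 0 (up x)) as [Hp|Hp].
  - exists (Z.to_nat (up x)). rewrite <- (Z2Nat.id (up x)) in H by lia.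
    rewrite <- INR_IZR_INZ in H. specialize (E (Z.to_nat (up x))). lra.
  - exists O. simpl. apply IZR_le in Hp. lra.
Qed.

Theorem goursat_abstract : J a b c d = 0%C.
Proof.
  set (E1 := fun x => exists n, x = rs1 (sq n)).
  set (E2 := fun x => exists n, x = rt1 (sq n)).
  assert (B1 : bound E1). { exists b. intros x [n ->]. pose proof (sq_inbase n) as [_ [X [Y _]]]. lra. }
  assert (B2 : bound E2). { exists d. intros x [n ->]. pose proof (sq_inbase n) as [_ [_ [_ [_ [X Y]]]]]. lra. }
  destruct (completeness E1 B1) as [qs [U1 L1]]. { exists (rs1 (sq 0)). exists O; auto. }
  destruct (completeness E2 B2) as [qt [U2 L2]]. { exists (rt1 (sq 0)). exists O; auto. }
  assert (Hqs : forall n, rs1 (sq n) <= qs /\ qs <= rs2 (sq n)).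
  { intros n. split. apply U1. exists n; auto. apply L1. intros x [m ->]. apply sq_nest. }
  assert (Hqt : forall n, rt1 (sq n) <= qt /\ qt <= rt2 (sq n)).
  { intros n. split. apply U2. exists n; auto. apply L2. intros x [m ->]. apply sq_nest. }
  assert (Hq1 : a <= qs <= b). { pose proof (Hqs O). unfold sq, base in H; simpl in H. lra. }
  assert (Hq2 : c <= qt <= d). { pose proof (Hqt O). unfold sq, base in H; simpl in H. lra. }
  set (L0 := (b - a) + (d - c)).
  assert (Key : forall eps, 0 < eps -> Cmod (JR base) <= eps * L0 ^ 2).
  { intros eps He. destruct (Hloc qs qt Hq1 Hq2 eps He) as [del [Hdel Hl]].
    destruct (pow2_large ((L0 + 1) / del)) as [n Hn].
    assert (P : 0 < 2 ^ n) by (apply pow_lt; lra).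
    destruct (sq_props n) as [S1 [S2 S3]].
    assert (Hsmall : L0 / 2 ^ n < del).
    { apply Rmult_lt_reg_r with (2 ^ n / del). apply Rdiv_lt_0_compat; lra.
      replace (L0 / 2 ^ n * (2 ^ n / del)) with (L0 / del) by (field; lra).
      replace (del * (2 ^ n / del)) with (2 ^ n) by (field; lra).
      apply Rle_lt_trans with ((L0 + 1) / del); auto. unfold Rdiv.
      apply Rmult_le_compat_r. left; apply Rinv_0_lt_compat; lra. lra. }
    pose proof (sq_inbase n) as [X1 [X2 [X3 [X4 [X5 X6]]]]].
    pose proof (Hqs n). pose proof (Hqt n).
    assert (Hb1 : (b - a) / 2 ^ n <= L0 / 2 ^ n). { unfold Rdiv. apply Rmult_le_compat_r. left; apply Rinv_0_lt_compat; lra. unfold L0; lra. }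
    assert (Hb2 : (d - c) / 2 ^ n <= L0 / 2 ^ n). { unfold Rdiv. apply Rmult_le_compat_r. left; apply Rinv_0_lt_compat; lra. unfold L0; lra. }
    specialize (Hl (rs1 (sq n)) (rs2 (sq n)) (rt1 (sq n)) (rt2 (sq n))).
    assert (Hc : Cmod (JR (sq n)) <= eps * (L0 / 2 ^ n) ^ 2).
    { unfold JR. eapply Rle_trans. apply Hl; lra.
      right. f_equal. rewrite S2, S3. unfold L0. field. lra. }
    assert (Hc2 : Cmod (JR base) / 4 ^ n <= eps * L0 ^ 2 / 4 ^ n).
    { eapply Rle_trans. apply S1. eapply Rle_trans. apply Hc. right.
      replace (4 ^ n) with ((2 ^ n) ^ 2). field. lra.
      rewrite <- pow_mult. rewrite Nat.mul_comm, pow_mult. f_equal. lra. }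
    assert (P4 : 0 < 4 ^ n) by (apply pow_lt; lra).
    apply Rmult_le_reg_r with (/ 4 ^ n). apply Rinv_0_lt_compat; lra. exact Hc2. }
  assert (H0 : Cmod (JR base) = 0).
  { pose proof (Cmod_ge_0 (JR base)). destruct (Rle_lt_or_eq_dec _ _ H) as [Hlt|Heq]; [|auto].
    exfalso. set (m := Cmod (JR base)) in *.
    assert (P : 0 <= L0 ^ 2) by (apply pow2_ge_0).
    specialize (Key (m / (2 * (L0 ^ 2 + 1)))). 
    assert (m / (2 * (L0 ^ 2 + 1)) * L0 ^ 2 < m).
    { apply Rmult_lt_reg_r with (2 * (L0 ^ 2 + 1)). lra.
      field_simplify; try lra. nra. }
    assert (0 < m / (2 * (L0 ^ 2 + 1))) by (apply Rdiv_lt_0_compat; lra). 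
    specialize (Key H1). lra. }
  apply Cmod_eq_0 in H0. exact H0.
Qed.

End Goursat.

Lemma ftc_C (P D : R -> C) a b :
  (forall u, is_derive (fun u => Re (P u)) u (Re (D u))) ->
  (forall u, is_derive (fun u => Im (P u)) u (Im (D u))) ->
  (forall u, continuous (fun u => Re (D u)) u) ->
  (forall u, continuous (fun u => Im (D u)) u) ->
  @is_RInt C_R_NormedModule D a b (P b - P a)%C.
Proof.
  intros H1 H2 H3 H4.
  replace (P b - P a)%C with ((Re (P b) - Re (P a)), (Im (P b) - Im (P a))).
  2: { apply C_ext; simpl; unfold Re, Im; simpl; ring. }
  apply (is_RInt_fct_extend_pair (U:=R_NormedModule) (V:=R_NormedModule) D).
  - apply (is_RInt_derive (fun u => Re (P u)) (fun u => fst (D u))).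
    + intros x _. apply H1.
    + intros x _. apply H3.
  - apply (is_RInt_derive (fun u => Im (P u)) (fun u => snd (D u))).
    + intros x _. apply H2.
    + intros x _. apply H4.
Qed.

Section Hom.
Variables (c0 c1 : C) (r0 r1 : R).
Definition Gam s t := (c0 + RtoC s * c1 + RtoC (r0 + s * r1) * eith t)%C.
Definition Gs (s t : R) := (c1 + RtoC r1 * eith t)%C.
Definition Gt s t := (RtoC (r0 + s * r1) * (Ci * eith t))%C.
Definition Faff (al be w : C) := (al * w + be * w * w / 2)%C.

Lemma ftc_t al be s t1 t2 :
  @is_RInt C_R_NormedModule (fun t => (al + be * Gam s t) * Gt s t)%C t1 t2
    (Faff al be (Gam s t2) - Faff al be (Gam s t1))%C.
Proof.
  apply (ftc_C (fun t => Faff al be (Gam s t))); intros u;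
  destruct al as [a1 a2], be as [b1 b2], c0 as [x0 y0], c1 as [x1 y1];
  unfold Faff, Gam, Gt, eith, Re, Im, Ci, Cmult, Cplus, Cdiv, Cinv, RtoC; simpl.
  - auto_derive; auto. field.
  - auto_derive; auto. field.
  - apply (ex_derive_continuous (K:=R_AbsRing) (V:=R_NormedModule)); auto_derive; auto.
  - apply (ex_derive_continuous (K:=R_AbsRing) (V:=R_NormedModule)); auto_derive; auto.
Qed.

Lemma ftc_s al be t s1 s2 :
  @is_RInt C_R_NormedModule (fun s => (al + be * Gam s t) * Gs s t)%C s1 s2
    (Faff al be (Gam s2 t) - Faff al be (Gam s1 t))%C.
Proof.
  apply (ftc_C (fun s => Faff al be (Gam s t))); intros u;
  destruct al as [a1 a2], be as [b1 b2];
  unfold Faff, Gam, Gs, eith, Re, Im, Ci, Cmult, Cplus, Cdiv, Cinv, RtoC; simpl.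
  - auto_derive; auto. field.
  - auto_derive; auto. field.
  - apply (ex_derive_continuous (K:=R_AbsRing) (V:=R_NormedModule)); auto_derive; auto.
  - apply (ex_derive_continuous (K:=R_AbsRing) (V:=R_NormedModule)); auto_derive; auto.
Qed.

Definition LG := Cmod c1 + Rabs r1 + Rabs r0 + 1.

Lemma LG_pos : 0 < LG.
Proof. unfold LG. pose proof (Cmod_ge_0 c1). pose proof (Rabs_pos r1). pose proof (Rabs_pos r0). lra. Qed.

Lemma rho_bound s : 0 <= s <= 1 -> Rabs (r0 + s * r1) <= Rabs r0 + Rabs r1.
Proof.
  intros Hs. eapply Rle_trans. apply Rabs_triang. rewrite Rabs_mult.
  rewrite (Rabs_pos_eq s) by lra. pose proof (Rabs_pos r1). nra.
Qed.

Lemma Gam_lip s t s' t' : 0 <= s' <= 1 ->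
  Cmod (Gam s t - Gam s' t') <= LG * Rabs (s - s') + 2 * LG * Rabs (t - t').
Proof.
  intros Hs'.
  replace (Gam s t - Gam s' t')%C with (RtoC (s - s') * (c1 + RtoC r1 * eith t) + RtoC (r0 + s' * r1) * (eith t - eith t'))%C.
  2: { apply C_ext; unfold Gam, eith, RtoC, Re, Im; simpl; ring. }
  eapply Rle_trans. apply Cmod_triangle. rewrite !Cmod_mult, !Cmod_R.
  pose proof (Cmod_triangle c1 (RtoC r1 * eith t)) as T. rewrite Cmod_mult, Cmod_R, Cmod_eith in T.
  pose proof (eith_lip t t'). pose proof (rho_bound s' Hs').
  pose proof (Rabs_pos (s - s')). pose proof (Rabs_pos (t - t')). pose proof (Rabs_pos (r0 + s' * r1)).
  pose proof (Cmod_ge_0 (eith t - eith t')).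
  unfold LG. pose proof (Cmod_ge_0 c1). pose proof (Rabs_pos r1). pose proof (Rabs_pos r0).
  assert (Cmod (c1 + r1 * eith t) <= Cmod c1 + Rabs r1 + Rabs r0 + 1) by lra.
  assert (Rabs (r0 + s' * r1) * Cmod (eith t - eith t') <= (Cmod c1 + Rabs r1 + Rabs r0 + 1) * (2 * Rabs (t - t'))).
  { apply Rmult_le_compat; try lra. }
  nra.
Qed.

Lemma Gt_bound s t : 0 <= s <= 1 -> Cmod (Gt s t) <= LG.
Proof.
  intros Hs. unfold Gt. rewrite !Cmod_mult, Cmod_R, Cmod_Ci, Cmod_eith.
  pose proof (rho_bound s Hs). unfold LG. pose proof (Cmod_ge_0 c1). lra.
Qed.

Lemma Gs_bound s t : Cmod (Gs s t) <= LG.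
Proof.
  unfold Gs. eapply Rle_trans. apply Cmod_triangle. rewrite Cmod_mult, Cmod_R, Cmod_eith.
  unfold LG. pose proof (Rabs_pos r0). lra.
Qed.

Lemma edge_bound (h g : R -> C) a b I V K : a <= b ->
  @is_RInt C_R_NormedModule h a b I -> @is_RInt C_R_NormedModule g a b V ->
  (forall t, a <= t <= b -> Cmod (h t - g t) <= K) -> Cmod (I - V) <= (b - a) * K.
Proof.
  intros Hab HI HV HK.
  apply (Cint_norm_le (fun t => h t - g t)%C (fun _ => K) a b); auto.
  apply (is_RInt_minus _ _ _ _ _ _ HI HV).
  evar_last. apply is_RInt_const. reflexivity.
Qed.

Lemma CChasles (h : R -> C) a b c : @ex_RInt C_R_CompleteNormedModule h a b -> @ex_RInt C_R_CompleteNormedModule h b c ->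
  (@RInt C_R_CompleteNormedModule h a b + @RInt C_R_CompleteNormedModule h b c)%C = @RInt C_R_CompleteNormedModule h a c.
Proof. intros H1 H2. exact (@RInt_Chasles C_R_CompleteNormedModule h a b c H1 H2). Qed.

Section Hom2.
Variable f : C -> C.
Hypothesis Hf : forall s t, 0 <= s <= 1 -> exists l, cdiff f (Gam s t) l.

Lemma cont_t s t : 0 <= s <= 1 -> ccont (fun t => f (Gam s t) * Gt s t)%C t.
Proof.
  intros Hs. apply ccont_mult.
  - apply (ccont_comp f (fun u => Gam s u)). destruct (Hf s t Hs) as [l Hl]. eapply cdiff_ccontC; eauto.
    apply (ccont_lip _ _ (2 * LG)). intros u. eapply Rle_trans. apply Gam_lip; auto.
    replace (s - s) with 0 by ring. rewrite Rabs_R0. lra.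
  - apply (ccont_lip _ _ (2 * LG)). intros u.
    replace (Gt s u - Gt s t)%C with (RtoC (r0 + s * r1) * Ci * (eith u - eith t))%C.
    2: { unfold Gt. ring. }
    rewrite !Cmod_mult, Cmod_R, Cmod_Ci. pose proof (eith_lip u t). pose proof (rho_bound s Hs).
    pose proof (Rabs_pos (r0 + s * r1)). pose proof (Cmod_ge_0 (eith u - eith t)).
    assert (Rabs r0 + Rabs r1 <= LG) by (unfold LG; pose proof (Cmod_ge_0 c1); lra).
    pose proof (Rabs_pos (u - t)).
    assert (Rabs (r0 + s * r1) * Cmod (eith u - eith t) <= LG * (2 * Rabs (u - t))) by (apply Rmult_le_compat; lra).
    lra.
Qed.

Lemma cont_s s t : 0 <= s <= 1 -> ccont (fun s => f (Gam s t) * Gs s t)%C s.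
Proof.
  intros Hs. apply ccont_mult.
  - apply (ccont_comp f (fun u => Gam u t)). destruct (Hf s t Hs) as [l Hl]. eapply cdiff_ccontC; eauto.
    apply (ccont_lip _ _ LG). intros u. eapply Rle_trans. apply Gam_lip; auto.
    replace (t - t) with 0 by ring. rewrite Rabs_R0. lra.
  - exact (ccont_const (Gs 0 t) s).
Qed.

Lemma ex_t s t1 t2 : 0 <= s <= 1 -> @ex_RInt C_R_CompleteNormedModule (fun t => f (Gam s t) * Gt s t)%C t1 t2.
Proof. intros Hs. apply ex_RInt_ccont. intros; apply cont_t; auto. Qed.

Lemma ex_s t s1 s2 : 0 <= s1 <= 1 -> 0 <= s2 <= 1 -> @ex_RInt C_R_CompleteNormedModule (fun s => f (Gam s t) * Gs s t)%C s1 s2.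
Proof.
  intros H1 H2. apply ex_RInt_ccont. intros s Hs. apply cont_s.
  split. eapply Rle_trans; [|apply Hs]. apply Rmin_glb; lra.
  eapply Rle_trans; [apply Hs|]. apply Rmax_lub; lra.
Qed.

Definition ET s t1 t2 := @RInt C_R_CompleteNormedModule (fun t => f (Gam s t) * Gt s t)%C t1 t2.
Definition ES t s1 s2 := @RInt C_R_CompleteNormedModule (fun s => f (Gam s t) * Gs s t)%C s1 s2.
Definition Jf s1 s2 t1 t2 := (ET s2 t1 t2 - ET s1 t1 t2 - ES t2 s1 s2 + ES t1 s1 s2)%C.

Lemma Jf_HS s1 s2 t1 t2 : 0 <= s1 -> s1 <= s2 -> s2 <= 1 ->
  Jf s1 s2 t1 t2 = (Jf s1 ((s1+s2)/2) t1 t2 + Jf ((s1+s2)/2) s2 t1 t2)%C.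
Proof.
  intros H1 H2 H3. unfold Jf, ES, ET.
  rewrite <- (CChasles (fun s => f (Gam s t2) * Gs s t2)%C s1 ((s1+s2)/2) s2) by (apply ex_s; lra).
  rewrite <- (CChasles (fun s => f (Gam s t1) * Gs s t1)%C s1 ((s1+s2)/2) s2) by (apply ex_s; lra).
  ring.
Qed.

Lemma Jf_HT s1 s2 t1 t2 : 0 <= s1 -> s1 <= s2 -> s2 <= 1 ->
  Jf s1 s2 t1 t2 = (Jf s1 s2 t1 ((t1+t2)/2) + Jf s1 s2 ((t1+t2)/2) t2)%C.
Proof.
  intros H1 H2 H3. unfold Jf, ES, ET.
  rewrite <- (CChasles (fun t => f (Gam s1 t) * Gt s1 t)%C t1 ((t1+t2)/2) t2) by (apply ex_t; lra).
  rewrite <- (CChasles (fun t => f (Gam s2 t) * Gt s2 t)%C t1 ((t1+t2)/2) t2) by (apply ex_t; lra).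
  ring.
Qed.


Lemma Jf_loc qs qt : 0 <= qs <= 1 -> forall eps, 0 < eps -> exists del, 0 < del /\
  forall s1 s2 t1 t2, 0 <= s1 -> s1 <= qs -> qs <= s2 -> s2 <= 1 -> t1 <= qt -> qt <= t2 ->
  s2 - s1 < del -> t2 - t1 < del -> Cmod (Jf s1 s2 t1 t2) <= eps * (s2 - s1 + (t2 - t1))^2.
Proof.
  intros Hq eps He. destruct (Hf qs qt Hq) as [l Hl]. set (p := Gam qs qt) in *.
  pose proof LG_pos as HL.
  set (e' := eps / (4 * (LG * LG))).
  assert (He' : 0 < e') by (apply Rdiv_lt_0_compat; nra).
  destruct (Hl e' He') as [d1 [Hd1 Hrem]].
  exists (d1 / (4 * LG)). split. apply Rdiv_lt_0_compat; lra.
  intros s1 s2 t1 t2 H1 H2 H3 H4 H5 H6 H7 H8.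
  set (rho := 2 * LG * (s2 - s1 + (t2 - t1))).
  assert (Hrho : rho < d1).
  { unfold rho. apply Rlt_le_trans with (2 * LG * (2 * (d1 / (4 * LG)))). 
    apply Rmult_lt_compat_l; lra. right; field; lra. }
  assert (HP : forall s t, s1 <= s <= s2 -> t1 <= t <= t2 -> Cmod (Gam s t - p) <= rho).
  { intros s t Hs Ht. unfold p. eapply Rle_trans. apply Gam_lip; auto.
    unfold rho.
    assert (Rabs (s - qs) <= s2 - s1) by (apply Rabs_le; lra).
    assert (Rabs (t - qt) <= t2 - t1) by (apply Rabs_le; lra). nra. 
  }
  set (al := (f p - l * p)%C). set (be := l).
  assert (Hpt : forall s t, s1 <= s <= s2 -> t1 <= t <= t2 -> Cmod (f (Gam s t) - (al + be * Gam s t)) <= e' * rho).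
  { intros s t Hs Ht. specialize (HP s t Hs Ht).
    replace (f (Gam s t) - (al + be * Gam s t))%C with (f (Gam s t) - f p - l * (Gam s t - p))%C by (unfold al, be; ring).
    eapply Rle_trans. apply Hrem. lra. apply Rmult_le_compat_l; lra. }
  set (K := e' * rho * LG).
  assert (HK0 : 0 <= K). { unfold K, rho. apply Rmult_le_pos; [|lra]. apply Rmult_le_pos; [lra|]. nra. }
  set (Fd := fun s => (Faff al be (Gam s t2) - Faff al be (Gam s t1))%C).
  set (Fe := fun t => (Faff al be (Gam s2 t) - Faff al be (Gam s1 t))%C).
  assert (BT : forall s, s = s1 \/ s = s2 -> Cmod (ET s t1 t2 - Fd s) <= (t2 - t1) * K).
  { intros s Hs. assert (Hs' : 0 <= s <= 1) by (destruct Hs; subst; lra).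
    apply (edge_bound (fun t => f (Gam s t) * Gt s t)%C (fun t => (al + be * Gam s t) * Gt s t)%C); [lra| | |].
    - exact (@RInt_correct C_R_CompleteNormedModule _ _ _ (ex_t s t1 t2 Hs')).
    - apply ftc_t.
    - intros t Ht. replace (f (Gam s t) * Gt s t - (al + be * Gam s t) * Gt s t)%C with
        ((f (Gam s t) - (al + be * Gam s t)) * Gt s t)%C by ring.
      rewrite Cmod_mult. unfold K. apply Rmult_le_compat. apply Cmod_ge_0. apply Cmod_ge_0.
      apply Hpt. destruct Hs; subst; lra. lra. apply Gt_bound; auto. }
  assert (BS : forall t, t = t1 \/ t = t2 -> Cmod (ES t s1 s2 - Fe t) <= (s2 - s1) * K).
  { intros t Ht.
    apply (edge_bound (fun s => f (Gam s t) * Gs s t)%C (fun s => (al + be * Gam s t) * Gs s t)%C); [lra| | |].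
    - exact (@RInt_correct C_R_CompleteNormedModule _ _ _ (ex_s t s1 s2 ltac:(lra) ltac:(lra))).
    - apply ftc_s.
    - intros s Hs. replace (f (Gam s t) * Gs s t - (al + be * Gam s t) * Gs s t)%C with
        ((f (Gam s t) - (al + be * Gam s t)) * Gs s t)%C by ring.
      rewrite Cmod_mult. unfold K. apply Rmult_le_compat. apply Cmod_ge_0. apply Cmod_ge_0.
      apply Hpt. lra. destruct Ht; subst; lra. apply Gs_bound. }
  replace (Jf s1 s2 t1 t2) with ((ET s2 t1 t2 - Fd s2) - (ET s1 t1 t2 - Fd s1) - (ES t2 s1 s2 - Fe t2) + (ES t1 s1 s2 - Fe t1))%C.
  2: { unfold Jf, Fd, Fe. ring. }
  pose proof (BT s2 (or_intror eq_refl)). pose proof (BT s1 (or_introl eq_refl)).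
  pose proof (BS t2 (or_intror eq_refl)). pose proof (BS t1 (or_introl eq_refl)).
  eapply Rle_trans. apply Cmod_triangle.
  eapply Rle_trans. apply Rplus_le_compat_r. apply Cmod_triangle.
  eapply Rle_trans. apply Rplus_le_compat_r. apply Rplus_le_compat_r. apply Cmod_triangle.
  rewrite !Cmod_opp.
  assert (E : eps * (s2 - s1 + (t2 - t1)) ^ 2 = 2 * (t2 - t1) * K + 2 * (s2 - s1) * K).
  { unfold K, rho, e'. field. lra. }
  rewrite E. lra.
Qed.

Theorem hom_cauchy :
  @RInt C_R_CompleteNormedModule (fun t => f (Gam 1 t) * Gt 1 t)%C 0 (2 * PI) =
  @RInt C_R_CompleteNormedModule (fun t => f (Gam 0 t) * Gt 0 t)%C 0 (2 * PI).
Proof.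
  assert (HPI : 0 < PI) by apply PI_RGT_0.
  assert (Hloc : forall s t, 0 <= s <= 1 -> 0 <= t <= 2 * PI -> forall eps, 0 < eps -> exists del, 0 < del /\
    forall s1 s2 t1 t2, 0 <= s1 -> s1 <= s -> s <= s2 -> s2 <= 1 -> 0 <= t1 -> t1 <= t -> t <= t2 -> t2 <= 2 * PI ->
    s2 - s1 < del -> t2 - t1 < del -> Cmod (Jf s1 s2 t1 t2) <= eps * (s2 - s1 + (t2 - t1))^2).
  { intros s t Hs Ht eps He. destruct (Jf_loc s t Hs eps He) as [del [Hdel Hl]].
    exists del; split; [exact Hdel|]. intros. apply Hl; lra. }
  pose proof (goursat_abstract Jf 0 1 0 (2 * PI) ltac:(lra) ltac:(lra)
    (fun s1 s2 t1 t2 H1 H2 H3 _ _ _ => Jf_HS s1 s2 t1 t2 H1 H2 H3)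
    (fun s1 s2 t1 t2 H1 H2 H3 _ _ _ => Jf_HT s1 s2 t1 t2 H1 H2 H3) Hloc) as G.
  assert (E : ES (2 * PI) 0 1 = ES 0 0 1).
  { unfold ES. apply RInt_ext. intros x _. unfold Gam, Gs, eith. rewrite cos_2PI, sin_2PI, cos_0, sin_0. reflexivity. }
  unfold Jf in G. rewrite E in G.
  assert (G' : ET 1 0 (2 * PI) = ET 0 0 (2 * PI)).
  { replace (ET 1 0 (2 * PI)) with ((ET 1 0 (2 * PI) - ET 0 0 (2 * PI) - ES 0 0 1 + ES 0 0 1) + ET 0 0 (2 * PI))%C by ring.
    rewrite G. apply Cplus_0_l. }
  exact G'.
Qed.

End Hom2.
End Hom.

Lemma ccont_path (k : C -> C) (P : R -> C) t L :
  (exists l, cdiff k (P t) l) -> (forall u, Cmod (P u - P t) <= L * Rabs (u - t)) ->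
  ccont (fun u => k (P u)) t.
Proof.
  intros [l Hl] HP. apply (ccont_comp k P). eapply cdiff_ccontC; eauto.
  eapply ccont_lip; eauto.
Qed.

Lemma circ_lip (c : C) (r : R) u t : Cmod ((c + RtoC r * eith u) - (c + RtoC r * eith t)) <= (2 * Rabs r) * Rabs (u - t).
Proof.
  replace ((c + RtoC r * eith u) - (c + RtoC r * eith t))%C with (RtoC r * (eith u - eith t))%C by ring.
  rewrite Cmod_mult, Cmod_R. pose proof (eith_lip u t). pose proof (Rabs_pos r). nra.
Qed.

Lemma Cmod_circ (r : R) t : 0 <= r -> Cmod (RtoC r * eith t) = r.
Proof. intros. rewrite Cmod_mult, Cmod_R, Cmod_eith, Rabs_pos_eq; lra. Qed.

Lemma cdiff_div_lin f w z : (exists l, cdiff f w l) -> w <> z ->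
  exists l, cdiff (fun u => f u * / (1 * u + - z))%C w l.
Proof.
  intros [l Hl] Hwz. eexists. apply cdiff_mult; eauto. apply cdiff_inv_aff.
  intro E. apply Hwz. replace w with (1 * w + - z + z)%C by ring. rewrite E. ring.
Qed.

Theorem CIF (f : C -> C) (R : R) (z : C) : 0 < R -> Cmod z < R ->
  (forall w, Cmod w <= R -> exists l, cdiff f w l) ->
  @is_RInt C_R_NormedModule (fun t => f (RtoC R * eith t) * (RtoC R * eith t / (RtoC R * eith t - z)))%C 0 (2 * PI)
    (RtoC (2 * PI) * f z)%C.
Proof.
  intros HR Hz Hf.
  assert (HPI : 0 < PI) by apply PI_RGT_0.
  pose proof (Cmod_ge_0 z) as Hz0.
  set (F1 := (fun t => f (RtoC R * eith t) * (RtoC R * eith t / (RtoC R * eith t - z)))%C).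
  assert (Hne : forall t, (RtoC R * eith t - z <> 0)%C).
  { intros t E. assert (E2 : (RtoC R * eith t = z)%C).
    { replace (RtoC R * eith t)%C with (RtoC R * eith t - z + z)%C by ring. rewrite E. ring. }
    rewrite <- E2, Cmod_circ in Hz; lra. }
  assert (Hex1 : @ex_RInt C_R_CompleteNormedModule F1 0 (2 * PI)).
  { apply ex_RInt_ccont. intros t _. unfold F1.
    apply (ccont_path (fun u => f u * (u / (u - z)))%C (fun t => RtoC R * eith t)%C t (2 * Rabs R)).
    - destruct (Hf (RtoC R * eith t)%C) as [l Hl]. rewrite Cmod_circ; lra.
      eexists. apply cdiff_mult; eauto.
      eapply cdiff_ext. 2: { apply cdiff_mult. apply cdiff_id. apply (cdiff_inv_aff 1 (-z)).
        intro E; apply (Hne t). rewrite <- E. ring. }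
      intros u; simpl. unfold Cdiv. f_equal. f_equal. ring.
    - intros u. pose proof (circ_lip 0 R u t). replace (0 + RtoC R * eith u - (0 + RtoC R * eith t))%C with (RtoC R * eith u - RtoC R * eith t)%C in H by ring. exact H. }
  set (I1 := @RInt C_R_CompleteNormedModule F1 0 (2 * PI)).
  assert (HI1 : @is_RInt C_R_NormedModule F1 0 (2 * PI) I1) by exact (@RInt_correct C_R_CompleteNormedModule _ _ _ Hex1).
  assert (Hdel : forall del, 0 < del -> del <= R - Cmod z ->
     @is_RInt C_R_NormedModule (fun t => f (z + RtoC del * eith t))%C 0 (2 * PI) I1).
  { intros del Hd1 Hd2.
    set (g := (fun u => f u * / (1 * u + - z))%C).
    assert (HG : forall s t, 0 <= s <= 1 -> exists l, cdiff g (Gam z (- z) del (R - del) s t) l).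
    { intros s t Hs. unfold g. apply cdiff_div_lin.
      - apply Hf. replace (Gam z (- z) del (R - del) s t) with (RtoC (1 - s) * z + RtoC (del + s * (R - del)) * eith t)%C.
        2: { apply C_ext; unfold Gam, RtoC, eith, Re, Im; simpl; ring. }
        eapply Rle_trans. apply Cmod_triangle. rewrite !Cmod_mult, !Cmod_R, Cmod_eith.
        rewrite (Rabs_pos_eq (1 - s)) by lra. rewrite (Rabs_pos_eq (del + s * (R - del))) by nra. nra.
      - intro E. 
        assert (E2 : (RtoC (del + s * (R - del)) * eith t = RtoC s * z)%C).
        { replace (RtoC (del + s * (R - del)) * eith t)%C with (Gam z (- z) del (R - del) s t - z + RtoC s * z)%C.
          rewrite E. ring. apply C_ext; unfold Gam, RtoC, eith, Re, Im; simpl; ring. }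
        assert (E3 := f_equal Cmod E2). rewrite Cmod_mult, Cmod_R, Cmod_eith, Cmod_mult, Cmod_R in E3.
        rewrite (Rabs_pos_eq s) in E3 by lra. rewrite Rabs_pos_eq in E3 by nra. nra. }
    pose proof (hom_cauchy z (- z) del (R - del) g HG) as HC.
    assert (E1 : @RInt C_R_CompleteNormedModule (fun t => g (Gam z (- z) del (R - del) 1 t) * Gt del (R - del) 1 t)%C 0 (2 * PI)
                 = @RInt C_R_CompleteNormedModule (fun t => Ci * F1 t)%C 0 (2 * PI)).
    { apply RInt_ext. intros t _. unfold g, F1, Gt.
      replace (Gam z (- z) del (R - del) 1 t) with (RtoC R * eith t)%C.
      2: { apply C_ext; unfold Gam, RtoC, eith, Re, Im; simpl; ring. }
      replace (del + 1 * (R - del)) with R by ring.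
      replace (1 * (RtoC R * eith t) + - z)%C with (RtoC R * eith t - z)%C by ring.
      match goal with |- ?a = ?b => change (@eq C a b) end. field. apply Hne. }
    assert (E0 : @RInt C_R_CompleteNormedModule (fun t => g (Gam z (- z) del (R - del) 0 t) * Gt del (R - del) 0 t)%C 0 (2 * PI)
                 = @RInt C_R_CompleteNormedModule (fun t => Ci * f (z + RtoC del * eith t))%C 0 (2 * PI)).
    { apply RInt_ext. intros t _. unfold g, Gt.
      replace (Gam z (- z) del (R - del) 0 t) with (z + RtoC del * eith t)%C.
      2: { apply C_ext; unfold Gam, RtoC, eith, Re, Im; simpl; ring. }
      replace (del + 0 * (R - del)) with del by ring.
      replace (1 * (z + RtoC del * eith t) + - z)%C with (RtoC del * eith t)%C by ring.
      match goal with |- ?a = ?b => change (@eq C a b) end. field. split. intro E. assert (E3 := f_equal Cmod E). rewrite Cmod_eith, Cmod_0 in E3. lra.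
      intro E. apply RtoC_inj in E. lra. }
    rewrite E1, E0 in HC.
    assert (Hex0 : @ex_RInt C_R_CompleteNormedModule (fun t => f (z + RtoC del * eith t))%C 0 (2 * PI)).
    { apply ex_RInt_ccont. intros t _.
      apply (ccont_path f (fun t => z + RtoC del * eith t)%C t (2 * Rabs del)).
      - apply Hf. eapply Rle_trans. apply Cmod_triangle. rewrite Cmod_circ; lra.
      - intros u. apply circ_lip. }
    pose proof (@RInt_correct C_R_CompleteNormedModule _ _ _ Hex0) as H0.
    pose proof (is_RInt_Cmult _ _ _ _ Ci HI1) as A1.
    pose proof (is_RInt_Cmult _ _ _ _ Ci H0) as A0.
    apply (is_RInt_unique (V:=C_R_CompleteNormedModule)) in A1. apply (is_RInt_unique (V:=C_R_CompleteNormedModule)) in A0.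
    rewrite A1, A0 in HC.
    assert (I1 = @RInt C_R_CompleteNormedModule (fun t => f (z + RtoC del * eith t))%C 0 (2 * PI)).
    { replace I1 with (- Ci * (Ci * I1))%C by (apply C_ext; unfold Ci, Cmult, Copp, Re, Im; simpl; ring).
      rewrite HC. apply C_ext; unfold Ci, Cmult, Copp; simpl; ring. }
    rewrite H. exact H0. }
  assert (Hbound : forall eps, 0 < eps -> Cmod (I1 - RtoC (2 * PI) * f z) <= 2 * PI * eps).
  { intros eps He.
    destruct (Hf z) as [l Hl]. lra.
    destruct (cdiff_ccontC f z l Hl eps He) as [d [Hd Hc]].
    set (del := Rmin (d / 2) (R - Cmod z)).
    assert (Hdp : 0 < del) by (apply Rmin_pos; lra).
    specialize (Hdel del Hdp (Rmin_r _ _)).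
    apply (edge_bound (fun t => f (z + RtoC del * eith t))%C (fun _ => f z) 0 (2 * PI) I1 (RtoC (2 * PI) * f z)%C eps) in Hdel.
    - replace (2 * PI - 0) with (2 * PI) in Hdel by ring. exact Hdel.
    - lra.
    - replace (RtoC (2 * PI)) with (RtoC (2 * PI - 0)) by (f_equal; ring). apply is_RInt_C_const.
    - intros t _. left. apply Hc.
      replace (z + RtoC del * eith t - z)%C with (RtoC del * eith t)%C by ring.
      rewrite Cmod_circ by lra. apply Rle_lt_trans with (d / 2). apply Rmin_l. lra. }
  assert (HE : I1 = (RtoC (2 * PI) * f z)%C).
  { assert (Hm : Cmod (I1 - RtoC (2 * PI) * f z) = 0).
    { pose proof (Cmod_ge_0 (I1 - RtoC (2 * PI) * f z)).
      destruct (Rle_lt_or_eq_dec _ _ H) as [Hlt|Heq]; [|auto].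
      set (m := Cmod (I1 - RtoC (2 * PI) * f z)) in *.
      specialize (Hbound (m / (4 * PI)) ltac:(apply Rdiv_lt_0_compat; lra)).
      replace (2 * PI * (m / (4 * PI))) with (m / 2) in Hbound by (field; lra). lra. }
    apply Cmod_eq_0 in Hm. replace I1 with (I1 - RtoC (2 * PI) * f z + RtoC (2 * PI) * f z)%C by ring.
    rewrite Hm. apply Cplus_0_l. }
  rewrite <- HE. exact HI1.
Qed.

Lemma eith_nz t : eith t <> 0%C.
Proof. intro E. pose proof (Cmod_eith t). rewrite E, Cmod_0 in H. lra. Qed.

Lemma conj_eith t : Cconj (eith t) = (/ eith t)%C.
Proof.
  assert (H : (eith t * Cconj (eith t) = 1)%C).
  { apply C_ext; unfold eith, Cconj, Cmult, Re, Im; simpl. pose proof (sin2_cos2 t) as H; unfold Rsqr in H. lra. lra. }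
  replace (Cconj (eith t)) with (/ eith t * (eith t * Cconj (eith t)))%C.
  rewrite H. ring. field. apply eith_nz.
Qed.

Lemma conj_RtoC r : Cconj (RtoC r) = RtoC r.
Proof. apply C_ext; unfold Cconj, RtoC, Re, Im; simpl; ring. Qed.

Lemma Cplus_conj_Re (h : C) : (h + Cconj h)%C = RtoC (2 * Re h).
Proof. apply C_ext; unfold Cconj, RtoC, Re, Im; simpl; ring. Qed.

Lemma alg_id (g z : C) (R t : R) : R <> 0 -> (RtoC R * eith t - z <> 0)%C ->
  (- Cconj z * (RtoC R * eith t) + RtoC (R * R) <> 0)%C ->
  (RtoC R * (g * (RtoC R * eith t / (RtoC R * eith t - z))) - RtoC R * (g * (RtoC R * eith t / (RtoC R * eith t - 0)))
   - z * (g * / eith t)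
   + Cconj (g * (Cconj z * Cconj z * RtoC R * / (- Cconj z * (RtoC R * eith t) + RtoC (R * R))) * (RtoC R * eith t / (RtoC R * eith t - 0))))%C
  = ((g * / eith t + Cconj (g * / eith t)) * (z * z / (RtoC R * eith t - z)))%C.
Proof.
  intros HR Hw Hd. pose proof (eith_nz t) as He.
  assert (HRc : RtoC R <> 0%C) by (intro E; apply RtoC_inj in E; lra).
  assert (Hw0 : (RtoC R * eith t - 0 <> 0)%C) by (replace (RtoC R * eith t - 0)%C with (RtoC R * eith t)%C by ring; apply Cmult_neq_0; auto).
  replace (RtoC R * eith t / (RtoC R * eith t - 0))%C with (RtoC 1) by (field; auto).
  rewrite !Cmult_conj, !Cconj_conj, !conj_RtoC, !Cinv_conj; auto. rewrite Cplus_conj, !Cmult_conj, Copp_conj, Cconj_conj, !conj_RtoC, conj_eith. rewrite RtoC_mult. field.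
  split; auto. split; auto. replace (- z * RtoC R + RtoC R * RtoC R * eith t)%C with (RtoC R * (RtoC R * eith t - z))%C by ring.
  apply Cmult_neq_0; auto.
Qed.

Section Main.
Variable G : C -> C.
Hypothesis HG : forall w, exists l, cdiff G w l.

Definition hh R t := (G (RtoC R * eith t) * / eith t)%C.
Definition BB R := @RInt C_R_CompleteNormedModule (hh R) 0 (2 * PI).

Lemma ex_hh R : @ex_RInt C_R_CompleteNormedModule (hh R) 0 (2 * PI).
Proof.
  apply ex_RInt_ccont. intros t _. unfold hh. apply ccont_mult.
  - apply (ccont_path G (fun t => RtoC R * eith t)%C t (2 * Rabs R)). apply HG.
    intros u. pose proof (circ_lip 0 R u t). replace (0 + RtoC R * eith u - (0 + RtoC R * eith t))%C with (RtoC R * eith u - RtoC R * eith t)%C in H by ring. exact H.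
  - apply (ccont_path (fun u => / u)%C eith t 2).
    eexists. eapply cdiff_ext. 2: { apply (cdiff_inv_aff 1 0). replace (1 * eith t + 0)%C with (eith t) by ring. apply eith_nz. }
    intros u. simpl. f_equal. ring.
    intros; apply eith_lip.
Qed.

Lemma key_est (R : R) (z : C) : 0 < R -> Cmod z < R ->
  (forall t, Re (hh R t) <= 1 / R) ->
  Cmod (RtoC (2 * PI * R) * (G z - G 0) - z * BB R) <=
    2 * (Cmod z ^ 2 / (R - Cmod z)) * (4 * PI / R + Cmod (BB R)) + 2 * PI * Cmod (G 0) * Cmod z ^ 2 / R.
Proof.
  intros HR Hz Hre.
  assert (HPI : 0 < PI) by apply PI_RGT_0.
  pose proof (Cmod_ge_0 z) as Hz0.
  assert (HGd : forall w, Cmod w <= R -> exists l, cdiff G w l) by (intros; apply HG).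
  pose proof (CIF G R z HR Hz HGd) as I1.
  assert (Hz0' : Cmod 0 < R) by (rewrite Cmod_0; lra).
  pose proof (CIF G R 0 HR Hz0' HGd) as I2.
  set (phi := (fun u => G u * ((Cconj z * Cconj z * RtoC R) * / (- Cconj z * u + RtoC (R * R))))%C).
  assert (Hphi : forall w, Cmod w <= R -> exists l, cdiff phi w l).
  { intros w Hw. destruct (HG w) as [l Hl]. eexists. apply cdiff_mult. eauto.
    eapply cdiff_ext. 2: { apply cdiff_mult. apply (cdiff_const (Cconj z * Cconj z * RtoC R)). apply cdiff_inv_aff.
      intro E. assert (E2 : (Cconj z * w = RtoC (R * R))%C).
      { replace (Cconj z * w)%C with (- (- Cconj z * w + RtoC (R * R)) + RtoC (R * R))%C by ring. rewrite E. ring. }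
      assert (E3 := f_equal Cmod E2). rewrite Cmod_mult, Cmod_conj, Cmod_R, Rabs_pos_eq in E3 by nra.
      pose proof (Cmod_ge_0 w). nra. }
    intros u; reflexivity. }
  pose proof (CIF phi R 0 HR Hz0' Hphi) as I4.
  pose proof (@RInt_correct C_R_CompleteNormedModule _ _ _ (ex_hh R)) as I3. fold (BB R) in I3.
  set (e := eith) in *.
  set (K := Cmod z ^ 2 / (R - Cmod z)).
  assert (Hw : forall t, (RtoC R * e t - z <> 0)%C).
  { intros t E. assert (E2 : (RtoC R * e t = z)%C).
    { replace (RtoC R * e t)%C with (RtoC R * e t - z + z)%C by ring. rewrite E. ring. }
    unfold e in E2. rewrite <- E2, Cmod_circ in Hz; lra. }
  assert (Hw0 : forall t, (RtoC R * e t <> 0)%C).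
  { intros t E. assert (E3 := f_equal Cmod E). unfold e in E3. rewrite Cmod_circ, Cmod_0 in E3; lra. }
  assert (HRne : RtoC R <> 0%C) by (intro E; apply RtoC_inj in E; lra).
  set (T := fun t => ((hh R t + Cconj (hh R t)) * (z * z / (RtoC R * e t - z)))%C).
  assert (IT : @is_RInt C_R_NormedModule T 0 (2 * PI)
     (RtoC R * (RtoC (2 * PI) * G z) - RtoC R * (RtoC (2 * PI) * G 0) - z * BB R + Cconj (RtoC (2 * PI) * phi 0))%C).
  { pose proof (is_RInt_Cmult _ _ _ _ (RtoC R) I1) as J1.
    pose proof (is_RInt_Cmult _ _ _ _ (RtoC R) I2) as J2.
    pose proof (is_RInt_Cmult _ _ _ _ z I3) as J3.
    pose proof (is_RInt_conj _ _ _ _ I4) as J4.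
    pose proof (is_RInt_plus _ _ _ _ _ _ (is_RInt_minus _ _ _ _ _ _ (is_RInt_minus _ _ _ _ _ _ J1 J2) J3) J4) as J.
    eapply is_RInt_ext. 2: exact J.
    intros t _. unfold T, hh, phi. unfold e.
    assert (Hd' : (- Cconj z * (RtoC R * eith t) + RtoC (R * R) <> 0)%C).
    { intro E. assert (E2 : (Cconj z * (RtoC R * eith t) = RtoC (R * R))%C).
      { replace (Cconj z * (RtoC R * eith t))%C with (- (- Cconj z * (RtoC R * eith t) + RtoC (R * R)) + RtoC (R * R))%C by ring. rewrite E. ring. }
      assert (E3 := f_equal Cmod E2). rewrite Cmod_mult, Cmod_conj, Cmod_circ, Cmod_R, Rabs_pos_eq in E3 by nra. nra. }
    rewrite <- (alg_id _ _ _ _ (Rgt_not_eq R 0 HR) (Hw t) Hd'). reflexivity. }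
  assert (Hphi0 : phi 0%C = (G 0 * (Cconj z * Cconj z) / RtoC R)%C).
  { unfold phi. rewrite RtoC_mult. field. auto. }
  set (gr := fun t => 2 * K * (2 / R - Re (hh R t))).
  assert (Ig : is_RInt gr 0 (2 * PI) (2 * K * (2 * PI * (2 / R) - Re (BB R)))).
  { pose proof (is_RInt_Re _ _ _ _ I3) as A1.
    pose proof (@is_RInt_const R_NormedModule 0 (2 * PI) (2 / R)) as A2.
    pose proof (is_RInt_scal _ _ _ (2 * K) _ (is_RInt_minus _ _ _ _ _ _ A2 A1)) as A3.
    eapply is_RInt_ext. 2: { evar_last. exact A3. unfold scal, minus, plus, opp; simpl. unfold mult; simpl. ring. }
    intros t _. unfold gr, scal, minus, plus, opp; simpl. unfold mult; simpl. ring. }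
  assert (HK : 0 <= K). { unfold K. apply Rdiv_le_0_compat. apply pow2_ge_0. lra. }
  assert (BV : Cmod (RtoC R * (RtoC (2 * PI) * G z) - RtoC R * (RtoC (2 * PI) * G 0) - z * BB R + Cconj (RtoC (2 * PI) * phi 0))%C
               <= 2 * K * (2 * PI * (2 / R) - Re (BB R))).
  { apply (Cint_norm_le T gr 0 (2 * PI)); auto. lra.
    intros t _. unfold T, gr. rewrite Cplus_conj_Re, Cmult_comm, Cmod_mult, Cmod_R.
    specialize (Hre t).
    assert (Hd : R - Cmod z <= Cmod (RtoC R * e t - z)).
    { pose proof (Cmod_triangle (RtoC R * e t - z) z) as Htri. replace (RtoC R * e t - z + z)%C with (RtoC R * e t)%C in Htri by ring.
      unfold e in Htri |- *. rewrite Cmod_circ in Htri; lra. }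
    rewrite Cmod_div by auto. rewrite Cmod_mult.
    assert (Hk : Cmod z * Cmod z / Cmod (RtoC R * e t - z) <= K).
    { unfold K. unfold Rdiv. replace (Cmod z ^ 2) with (Cmod z * Cmod z) by ring.
      apply Rmult_le_compat_l. nra. apply Rinv_le_contravar; lra. }
    assert (Ha : Rabs (2 * Re (hh R t)) <= 2 * (2 / R - Re (hh R t))).
    { apply Rabs_le. split. assert (0 < 2 / R) by (apply Rdiv_lt_0_compat; lra). lra. lra. }
    pose proof (Rabs_pos (2 * Re (hh R t))).
    assert (0 <= Cmod z * Cmod z / Cmod (RtoC R * e t - z)).
    { apply Rdiv_le_0_compat. nra. lra. }
    set (X := Cmod z * Cmod z / Cmod (RtoC R * e t - z)) in *.
    assert (Rabs (2 * Re (hh R t)) * X <= (2 * (2 / R - Re (hh R t))) * K) by (apply Rmult_le_compat; auto).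
    assert (X * Rabs (2 * Re (hh R t)) <= K * (2 * (2 / R - Re (hh R t)))) by (apply Rmult_le_compat; auto).
    lra. }
  replace (RtoC (2 * PI * R) * (G z - G 0) - z * BB R)%C with
    ((RtoC R * (RtoC (2 * PI) * G z) - RtoC R * (RtoC (2 * PI) * G 0) - z * BB R + Cconj (RtoC (2 * PI) * phi 0)) - Cconj (RtoC (2 * PI) * phi 0))%C.
  2: { rewrite !RtoC_mult. ring. }
  eapply Rle_trans. apply Cmod_triangle. rewrite Cmod_opp, Cmod_conj.
  assert (Ephi : Cmod (RtoC (2 * PI) * phi 0) = 2 * PI * Cmod (G 0) * Cmod z ^ 2 / R).
  { rewrite Hphi0. rewrite Cmod_mult, Cmod_R, Cmod_div by auto. rewrite !Cmod_mult, Cmod_conj, Cmod_R, !Rabs_pos_eq by lra.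
    field. lra. }
  rewrite Ephi.
  pose proof (re_le_Cmod (BB R)). pose proof (Rabs_le_between (Re (BB R)) (Cmod (BB R))) as [X _].
  pose proof (X ltac:(lra)) as [X1 _].
  assert (2 * K * (2 * PI * (2 / R) - Re (BB R)) <= 2 * K * (4 * PI / R + Cmod (BB R))).
  { apply Rmult_le_compat_l. lra. replace (2 * PI * (2 / R)) with (4 * PI / R) by (field; lra). lra. }
  unfold K in *. lra.
Qed.
End Main.

Lemma Re_RtoC_mult (r : R) (c : C) : Re (RtoC r * c) = r * Re c.
Proof. unfold Re, RtoC, Cmult; simpl. ring. Qed.

Lemma div_le_div x y y' : 0 <= x -> 0 < y' -> y' <= y -> x / y <= x / y'.
Proof.
  intros. unfold Rdiv. apply Rmult_le_compat_l; auto. apply Rinv_le_contravar; auto.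
Qed.

Lemma R3_ge R : 1 <= R -> R <= R ^ 3.
Proof. intros. replace (R ^ 3) with (R * (R * R)) by ring. nra. Qed.
Lemma R2_ge R : 1 <= R -> R <= R ^ 2.
Proof. intros. replace (R ^ 2) with (R * R) by ring. nra. Qed.

Section Aff.
Variable G : C -> C.
Hypothesis HG : forall w, exists l, cdiff G w l.
Variable M : R.
Hypothesis Hlim : forall w, M < Cmod w -> Re (Cconj w * G w) <= 1.

Definition beta R := (BB G R / RtoC (2 * PI * R))%C.

Lemma est2 R z : 0 < R -> M < R -> 2 * Cmod z + 1 <= R ->
  Cmod (G z - G 0 - beta R * z) <= 8 * Cmod z ^ 2 / R ^ 3 + 4 * Cmod z ^ 2 * Cmod (beta R) / R + Cmod (G 0) * Cmod z ^ 2 / R ^ 2.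
Proof.
  intros HR HM Hz. pose proof (Cmod_ge_0 z) as Hz0.
  assert (HPI : 0 < PI) by apply PI_RGT_0.
  assert (Hre : forall t, Re (hh G R t) <= 1 / R).
  { intros t. specialize (Hlim (RtoC R * eith t)%C). rewrite Cmod_circ in Hlim by lra.
    specialize (Hlim HM).
    replace (Cconj (RtoC R * eith t) * G (RtoC R * eith t))%C with (RtoC R * hh G R t)%C in Hlim.
    2: { unfold hh. rewrite Cmult_conj, conj_RtoC, conj_eith. ring. }
    rewrite Re_RtoC_mult in Hlim. apply Rmult_le_reg_l with R. lra. field_simplify; lra. }
  pose proof (key_est G HG R z HR ltac:(lra) Hre) as K.
  set (B := BB G R) in *.
  assert (H2 : RtoC (2 * PI * R) <> 0%C) by (intro E; apply RtoC_inj in E; nra).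
  replace (RtoC (2 * PI * R) * (G z - G 0) - z * B)%C with (RtoC (2 * PI * R) * (G z - G 0 - beta R * z))%C in K.
  2: { unfold beta. fold B. field. auto. }
  rewrite Cmod_mult, Cmod_R, Rabs_pos_eq in K by nra.
  assert (HB : Cmod B = 2 * PI * R * Cmod (beta R)).
  { unfold beta. fold B. rewrite Cmod_div by auto. rewrite Cmod_R, Rabs_pos_eq by nra. field. lra. }
  rewrite HB in K.
  set (X := Cmod (G z - G 0 - beta R * z)) in *. set (bt := Cmod (beta R)) in *.
  pose proof (Cmod_ge_0 (beta R)) as Hbt. fold bt in Hbt.
  assert (HKz : Cmod z ^ 2 / (R - Cmod z) <= 2 * Cmod z ^ 2 / R).
  { unfold Rdiv. replace (2 * Cmod z ^ 2 * / R) with (Cmod z ^ 2 * / (R / 2)) by (field; lra).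
    apply Rmult_le_compat_l. apply pow2_ge_0.
    apply Rinv_le_contravar; lra. }
  set (Kz := Cmod z ^ 2 / (R - Cmod z)) in *.
  assert (HKz0 : 0 <= Kz). { unfold Kz. apply Rdiv_le_0_compat. apply pow2_ge_0. lra. }
  assert (Step : 2 * PI * R * X <= 2 * (2 * Cmod z ^ 2 / R) * (4 * PI / R + 2 * PI * R * bt) + 2 * PI * Cmod (G 0) * Cmod z ^ 2 / R).
  { eapply Rle_trans. exact K. apply Rplus_le_compat_r. apply Rmult_le_compat_r.
    assert (0 < 4 * PI / R) by (apply Rdiv_lt_0_compat; lra).
    assert (0 <= 2 * PI * R * bt) by (apply Rmult_le_pos; [nra|lra]). lra. lra. }
  apply Rmult_le_reg_l with (2 * PI * R). nra.
  eapply Rle_trans. exact Step. right. field. lra.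
Qed.

Lemma affine : forall z, G z = (G 0 + (G 1 - G 0) * z)%C.
Proof.
  intros z. set (a := (G 1 - G 0)%C).
  pose proof (Cmod_ge_0 z) as Hz0.
  set (g0 := Cmod (G 0)). assert (Hg0 : 0 <= g0) by apply Cmod_ge_0.
  set (Bd := 2 * (Cmod a + 1 + g0)).
  assert (HBd : 0 <= Bd) by (unfold Bd; pose proof (Cmod_ge_0 a); lra).
  assert (Hbeta : forall R, 0 < R -> M < R -> 8 <= R -> Cmod (beta R) <= Bd /\ Cmod (beta R - a) <= (8 + 4 * Bd + g0) / R).
  { intros R HR HM H8.
    pose proof (est2 R 1 HR HM) as E1. rewrite Cmod_1 in E1. specialize (E1 ltac:(lra)).
    replace (G 1 - G 0 - beta R * 1)%C with (a - beta R)%C in E1 by (unfold a; ring).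
    fold g0 in E1.
    pose proof (Cmod_ge_0 (beta R)) as Hb.
    assert (T1 : Cmod (beta R) <= Cmod a + Cmod (a - beta R)).
    { pose proof (Cmod_triangle a (- (a - beta R))). rewrite Cmod_opp in H. replace (a + - (a - beta R))%C with (beta R) in H by ring. lra. }
    pose proof (R3_ge R ltac:(lra)). pose proof (R2_ge R ltac:(lra)).
    assert (R3 : 8 / R ^ 3 <= 1).
    { eapply Rle_trans. apply (div_le_div 8 (R ^ 3) 8); lra. right; field. }
    assert (R2 : g0 / R ^ 2 <= g0).
    { destruct (Rle_lt_or_eq_dec _ _ Hg0) as [Hp|Hp]. 
      eapply Rle_trans. apply (div_le_div g0 (R ^ 2) 1); lra. right; field.
      rewrite <- Hp. unfold Rdiv. lra. }
    assert (R1 : 4 * 1 ^ 2 * Cmod (beta R) / R <= Cmod (beta R) / 2).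
    { replace (4 * 1 ^ 2 * Cmod (beta R) / R) with (Cmod (beta R) * (4 / R)) by (field; lra).
      replace (Cmod (beta R) / 2) with (Cmod (beta R) * (4 / 8)) by field.
      apply Rmult_le_compat_l; auto. apply div_le_div; lra. }
    assert (HbB : Cmod (beta R) <= Bd).
    { unfold Bd. assert (8 * 1 ^ 2 / R ^ 3 <= 1) by (replace (8 * 1 ^ 2) with 8 by ring; auto).
      assert (g0 * 1 ^ 2 / R ^ 2 <= g0) by (replace (g0 * 1 ^ 2) with g0 by ring; auto). lra. }
    split; auto.
    rewrite <- Cmod_opp. replace (- (beta R - a))%C with (a - beta R)%C by ring.
    eapply Rle_trans. exact E1.
    assert (8 * 1 ^ 2 / R ^ 3 <= 8 / R).
    { replace (8 * 1 ^ 2) with 8 by ring. apply div_le_div; lra. }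
    assert (4 * 1 ^ 2 * Cmod (beta R) / R <= 4 * Bd / R).
    { unfold Rdiv. apply Rmult_le_compat_r. left; apply Rinv_0_lt_compat; lra. nra. }
    assert (g0 * 1 ^ 2 / R ^ 2 <= g0 / R).
    { replace (g0 * 1 ^ 2) with g0 by ring. apply div_le_div; lra. }
    assert ((8 + 4 * Bd + g0) / R = 8 / R + 4 * Bd / R + g0 / R) by (field; lra). lra. }
  set (C2 := Cmod z ^ 2 * (8 + 4 * Bd + g0) + Cmod z * (8 + 4 * Bd + g0)).
  assert (HC2 : 0 <= C2). { unfold C2. pose proof (pow2_ge_0 (Cmod z)). nra. }
  assert (Hmain : forall R, 0 < R -> M < R -> 8 <= R -> 2 * Cmod z + 1 <= R ->
     Cmod (G z - (G 0 + a * z)) <= C2 / R).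
  { intros R HR HM H8 Hz. destruct (Hbeta R HR HM H8) as [B1 B2].
    pose proof (est2 R z HR HM Hz) as E. fold g0 in E.
    replace (G z - (G 0 + a * z))%C with ((G z - G 0 - beta R * z) + (beta R - a) * z)%C by ring.
    eapply Rle_trans. apply Cmod_triangle. rewrite Cmod_mult.
    assert (Cmod (beta R - a) * Cmod z <= (8 + 4 * Bd + g0) / R * Cmod z) by (apply Rmult_le_compat_r; auto).
    assert (8 * Cmod z ^ 2 / R ^ 3 <= 8 * Cmod z ^ 2 / R).
    { unfold Rdiv. apply Rmult_le_compat_l. pose proof (pow2_ge_0 (Cmod z)); lra.
      apply Rinv_le_contravar. lra. replace (R ^ 3) with (R * (R * R)) by ring. nra. }
    assert (4 * Cmod z ^ 2 * Cmod (beta R) / R <= 4 * Cmod z ^ 2 * Bd / R).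
    { unfold Rdiv. apply Rmult_le_compat_r. left; apply Rinv_0_lt_compat; lra.
      apply Rmult_le_compat_l; auto. pose proof (pow2_ge_0 (Cmod z)); lra. }
    assert (g0 * Cmod z ^ 2 / R ^ 2 <= g0 * Cmod z ^ 2 / R).
    { unfold Rdiv. apply Rmult_le_compat_l. pose proof (pow2_ge_0 (Cmod z)); nra.
      apply Rinv_le_contravar. lra. replace (R ^ 2) with (R * R) by ring. nra. }
    assert (C2 / R = 8 * Cmod z ^ 2 / R + 4 * Cmod z ^ 2 * Bd / R + g0 * Cmod z ^ 2 / R + (8 + 4 * Bd + g0) / R * Cmod z)
      by (unfold C2; field; lra).
    lra. }
  assert (HD : Cmod (G z - (G 0 + a * z)) = 0).
  { pose proof (Cmod_ge_0 (G z - (G 0 + a * z))) as H0.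
    destruct (Rle_lt_or_eq_dec _ _ H0) as [Hlt|Heq]; [|auto].
    set (D := Cmod (G z - (G 0 + a * z))) in *.
    set (R := Rmax (Rmax (Rabs M + 1) 8) (Rmax (2 * Cmod z + 1) (2 * C2 / D + 1))).
    assert (A1 : Rabs M + 1 <= R) by (unfold R; eapply Rle_trans; [apply Rmax_l|]; apply Rmax_l).
    assert (A2 : 8 <= R) by (unfold R; eapply Rle_trans; [apply Rmax_r|]; apply Rmax_l).
    assert (A3 : 2 * Cmod z + 1 <= R) by (unfold R; eapply Rle_trans; [apply Rmax_l|]; apply Rmax_r).
    assert (A4 : 2 * C2 / D + 1 <= R) by (unfold R; eapply Rle_trans; [apply Rmax_r|]; apply Rmax_r).
    pose proof (Rle_abs M).
    specialize (Hmain R ltac:(lra) ltac:(lra) A2 A3).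
    assert (C2 / R < D).
    { apply Rmult_lt_reg_r with R. lra. field_simplify; try lra.
      assert (2 * C2 / D * D = 2 * C2) by (field; lra).
      assert (2 * C2 / D * D + D <= R * D) by nra. lra. }
    lra. }
  apply Cmod_eq_0 in HD. replace (G z) with (G z - (G 0 + a * z) + (G 0 + a * z))%C by ring.
  rewrite HD. ring.
Qed.
End Aff.

Lemma Cmod_sq (z : C) : Cmod z ^ 2 = Re z ^ 2 + Im z ^ 2.
Proof.
  unfold Cmod, Re, Im. rewrite pow2_sqrt. reflexivity.
  pose proof (pow2_ge_0 (fst z)); pose proof (pow2_ge_0 (snd z)); lra.
Qed.

Lemma Re_formula (a b z : C) : Re (Cconj z * (a * z + b)) = Re a * Cmod z ^ 2 + Re (Cconj z * b).
Proof.
  rewrite Cmod_sq. destruct a as [a1 a2], b as [b1 b2], z as [x y].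
  unfold Re, Im, Cconj, Cmult, Cplus; simpl. ring.
Qed.

Lemma Re_conj_le (z b : C) : Re (Cconj z * b) <= Cmod z * Cmod b.
Proof.
  pose proof (re_le_Cmod (Cconj z * b)). rewrite Cmod_mult, Cmod_conj in H.
  pose proof (Rle_abs (Re (Cconj z * b))). lra.
Qed.

Theorem proposition2p5 (G : C -> C) (HG : entire G) :
  limsup_at_infty_le0 (fun z => Re (Cmult (Cconj z) (G z))) <->
  exists a b : C, (forall z : C, G z = Cplus (Cmult a z) b) /\
    ((in_Cminus a) \/ (in_iR a /\ b = RtoC 0)).
Proof.
  assert (HG' : forall w, exists l, cdiff G w l).
  { intros w. destruct (HG w) as [l Hl]. exists l. apply is_derive_cdiff. exact Hl. }
  split.
  - intros Hl. destruct (Hl 1 Rlt_0_1) as [M HM].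
    pose proof (affine G HG' M HM) as Haff.
    set (a := (G 1 - G 0)%C). set (b := G 0).
    assert (HGab : forall z, G z = (a * z + b)%C). { intros z. rewrite Haff. unfold a, b. ring. }
    exists a, b. split; [exact HGab|].
    unfold in_Cminus, in_iR.
    destruct (Rtotal_order (Re a) 0) as [Hn|[H0|Hp]].
    + left; exact Hn.
    + right. split; auto.
      destruct (Ceq_dec b 0) as [Hb|Hb]; auto. exfalso.
      assert (Hbp : 0 < Cmod b) by (apply Cmod_gt_0; auto).
      set (t := Rmax (Rabs M / Cmod b + 1) (2 / (Cmod b ^ 2))).
      assert (T1 : Rabs M / Cmod b + 1 <= t) by apply Rmax_l.
      assert (T2 : 2 / (Cmod b ^ 2) <= t) by apply Rmax_r.
      assert (Ht : 0 < t). { assert (0 <= Rabs M / Cmod b) by (apply Rdiv_le_0_compat; [apply Rabs_pos|lra]). lra. }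
      specialize (HM (RtoC t * b)%C).
      rewrite HGab, Re_formula, H0 in HM.
      rewrite Cmod_mult, Cmod_R, Rabs_pos_eq in HM by lra.
      assert (E : Re (Cconj (RtoC t * b) * b) = t * Cmod b ^ 2).
      { rewrite Cmod_sq. destruct b as [b1 b2]. unfold Re, Im, Cconj, Cmult, RtoC; simpl. ring. }
      rewrite E in HM.
      assert (HM' : M < t * Cmod b).
      { pose proof (Rle_abs M). apply Rlt_le_trans with ((Rabs M / Cmod b + 1) * Cmod b).
        replace ((Rabs M / Cmod b + 1) * Cmod b) with (Rabs M + Cmod b) by (field; lra). lra.
        apply Rmult_le_compat_r; lra. }
      specialize (HM HM').
      assert (2 <= t * Cmod b ^ 2).
      { replace 2 with (2 / Cmod b ^ 2 * Cmod b ^ 2) by (field; lra). apply Rmult_le_compat_r.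
        apply pow2_ge_0. exact T2. }
      lra.
    + exfalso.
      pose proof (Cmod_ge_0 b) as Hb0.
      set (t := Rmax (Rabs M + 1) ((Cmod b + 2) / Re a)).
      assert (T1 : Rabs M + 1 <= t) by apply Rmax_l.
      assert (T2 : (Cmod b + 2) / Re a <= t) by apply Rmax_r.
      pose proof (Rabs_pos M). pose proof (Rle_abs M).
      specialize (HM (RtoC t)). rewrite Cmod_R, Rabs_pos_eq in HM by lra.
      specialize (HM ltac:(lra)). rewrite HGab, Re_formula, Cmod_R, Rabs_pos_eq in HM by lra.
      pose proof (Re_conj_le (RtoC t) b) as Hc. rewrite Cmod_R, Rabs_pos_eq in Hc by lra.
      pose proof (Cmod_ge_0 (Cconj (RtoC t) * b)).
      assert (Hat : Cmod b + 2 <= Re a * t).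
      { assert (Hq : (Cmod b + 2) / Re a * Re a <= t * Re a) by (apply Rmult_le_compat_r; lra).
        replace ((Cmod b + 2) / Re a * Re a) with (Cmod b + 2) in Hq by (field; lra). lra. }
      assert (Re (Cconj (RtoC t) * b) >= - (t * Cmod b)).
      { pose proof (re_le_Cmod (Cconj (RtoC t) * b)) as Hr2. rewrite Cmod_mult, Cmod_conj, Cmod_R, (Rabs_pos_eq t) in Hr2 by lra.
        apply Rabs_le_between in Hr2. lra. }
      assert (Re a * t ^ 2 - t * Cmod b >= 2 * t) by nra.
      lra.
  - intros [a [b [Hab Hcase]]] eps He.
    unfold in_Cminus, in_iR in Hcase.
    destruct Hcase as [Hn | [H0 Hb]].
    + exists (Cmod b / (- Re a)). intros z Hz.
      rewrite Hab, Re_formula.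
      pose proof (Re_conj_le z b). pose proof (Cmod_ge_0 b).
      assert (0 <= Cmod b / - Re a) by (apply Rdiv_le_0_compat; lra).
      assert (Cmod b < Cmod z * (- Re a)).
      { replace (Cmod b) with (Cmod b / - Re a * (- Re a)) by (field; lra). apply Rmult_lt_compat_r; lra. }
      assert (Re a * Cmod z ^ 2 + Cmod z * Cmod b <= 0) by nra.
      lra.
    + exists 0. intros z Hz. rewrite Hab, Re_formula, H0, Hb.
      replace (Cconj z * RtoC 0)%C with (RtoC 0) by ring. simpl. lra.
Qed.
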